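(* Let $(\mathcal M,X,\bot)$ be a concurrent system. (1) If $\alpha\in X$ satisfies $\mathcal M_\alpha\ne\{\varepsilon\}$, then every pair $(\alpha,c)$ with $c$ a maximal element (for inclusion) of $\mathfrak C_\alpha$ is a positive node of the DSC. (2) If $((\alpha,c),(\alpha',c'))$ is an arc of the DSC and $(\alpha',c')$ is positive, then $(\alpha,c)$ is positive. (3) For every $\alpha\in X$ and every $x\in\mathcal M_\alpha$ there exists $y\in\mathcal M_{\alpha\cdot x}$ such that $xy$ has the same height as $x$ and all nodes of the DSC path corresponding to $xy$ are positive. (4) If $(\alpha,c)$ is a null node, then for every $x\in\mathcal M_\alpha$ with $C_1(x)=c$ there exists a letter $a\in\Sigma$ such that $x\in\mathcal M^a$, i.e. $x$ has no occurrence of $a$.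
   Context: A trace monoid $\mathcal M=\mathcal M(\Sigma,I)$ is $\langle\Sigma\mid ab=ba\ ((a,b)\in I)\rangle$, $\Sigma$ finite, $I$ irreflexive symmetric; $\varepsilon$ is the unit; for $a\in\Sigma$, $\mathcal M^a=\langle\Sigma\setminus\{a\}\rangle$. A clique is a trace of pairwise distinct letters pairwise in $I$; $\mathfrak C$ is the set of nonempty cliques; for $c,c'\in\mathfrak C$, $c\to c'$ means every letter of $c'$ is in relation $(\Sigma\times\Sigma)\setminus I$ with some letter of $c$. Each nonempty trace $x$ has a unique normal form $x=c_1\cdots c_h$, $c_i\in\mathfrak C$, $c_i\to c_{i+1}$; $h$ is the height of $x$ (height of $\varepsilon$ is $0$) and $C_1(x)=c_1$. A concurrent system $(\mathcal M,X,\bot)$: $X$ finite, $\bot\notin X$, right action of $\mathcal M$ on $X\cup\{\bot\}$ with $\bot\cdot x=\bot$; $\mathcal M_\alpha=\{x:\alpha\cdot x\ne\bot\}$, $\mathfrak C_\alpha=\mathfrak C\cap\mathcal M_\alpha$. DSC: nodes $(\alpha,c)$, $c\in\mathfrak C_\alpha$, arc $(\alpha,c)\to(\beta,d)$ iff $\beta=\alpha\cdot c$ and $c\to d$. The DSC path corresponding to $x\in\mathcal M_\alpha\setminus\{\varepsilon\}$ with normal form $c_1\cdots c_h$ is $((\alpha_0,c_1),\dots,(\alpha_{h-1},c_h))$, $\alpha_0=\alpha$, $\alpha_{i}=\alpha_{i-1}\cdot c_{i}$. A node $(\alpha,c)$ is positive if there exists $x\in\mathcal M_\alpha$ with $C_1(xy)=c$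 for all $y\in\mathcal M_{\alpha\cdot x}$; it is null otherwise. *)

(* Defs.v *)
From Stdlib Require Import Relations.
From mathcomp Require Import all_boot.
Set Implicit Arguments. Unset Strict Implicit. Unset Printing Implicit Defensive.

Section TraceMonoid.
Variable Sigma : finType.
Variable I : rel Sigma.

(* Traces are represented by words; two words denote the same trace iff they
   are related by the congruence generated by ab = ba, (a,b) \in I. *)
Definition swap_step (u v : seq Sigma) : Prop :=
  exists p q a b, I a b /\ u = p ++ [:: a; b] ++ q /\ v = p ++ [:: b; a] ++ q.
Definition tequiv : relation (seq Sigma) := clos_refl_trans _ swap_step.

(* A clique is determined by its (nonempty) set of pairwise independent letters;
   the trace of a clique c is the word enum c (any order gives the same trace). *)
Definition is_clique (c : {set Sigma}) : bool :=
  [forall a in c, forall b in c, (a != b) ==> I a b].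
Definition nclique (c : {set Sigma}) : bool := is_clique c && (c != set0).
Definition clique_word (c : {set Sigma}) : seq Sigma := enum c.

Definition arrow (c c' : {set Sigma}) : bool :=
  [forall b in c', exists a in c, ~~ I a b].

Definition is_nf (cs : seq {set Sigma}) : bool := all nclique cs && sorted arrow cs.
Definition nf_of (x : seq Sigma) (cs : seq {set Sigma}) : Prop :=
  is_nf cs /\ tequiv x (flatten (map clique_word cs)).
(* C_1(x) = c  (normal forms are unique) *)
Definition C1 (x : seq Sigma) (c : {set Sigma}) : Prop := exists cs, nf_of x (c :: cs).

(* Concurrent system: right action given on letters, extended to words;
   None plays the role of the sink state \bot. *)
Variable X : finType.
Variable delta : X -> Sigma -> option X.

Fixpoint act (alpha : X) (u : seq Sigma) : option X :=
  match u with
  | [::] => Some alpha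
  | a :: u' => if delta alpha a is Some b then act b u' else None
  end.
Definition acto (s : option X) (u : seq Sigma) : option X :=
  if s is Some b then act b u else None.

Definition inM (alpha : X) (u : seq Sigma) : bool := act alpha u != None.
Definition inMo (s : option X) (u : seq Sigma) : bool := acto s u != None.

Definition action_of_trace_monoid : Prop :=
  forall alpha u v, tequiv u v -> act alpha u = act alpha v.

Definition node (alpha : X) (c : {set Sigma}) : bool :=
  nclique c && inM alpha (clique_word c).
Definition dsc_arc (alpha : X) (c : {set Sigma}) (beta : X) (d : {set Sigma}) : Prop :=
  node alpha c /\ node beta d /\ act alpha (clique_word c) = Some beta /\ arrow c d.

Definition maximal_in_C (alpha : X) (c : {set Sigma}) : Prop :=
  node alpha c /\ forall c', node alpha c' -> c \subset c' -> c' = c.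

Definition positive (alpha : X) (c : {set Sigma}) : Prop :=
  exists x, inM alpha x /\ forall y, inMo (act alpha x) y -> C1 (x ++ y) c.
Definition null_node (alpha : X) (c : {set Sigma}) : Prop :=
  node alpha c /\ ~ positive alpha c.

Fixpoint dsc_path_positive (alpha : X) (cs : seq {set Sigma}) : Prop :=
  match cs with
  | [::] => True
  | c :: cs' => positive alpha c /\
      match act alpha (clique_word c) with
      | Some beta => dsc_path_positive beta cs'
      | None => False
      end
  end.

End TraceMonoid.

(* Main.v *)
Require Import Defs.
From mathcomp Require Import all_boot.
From mathcomp Require Import zify.
From Stdlib Require Import Relations.
Set Implicit Arguments. Unset Strict Implicit. Unset Printing Implicit Defensive.

Section Traces.
Variable Sigma : finType.
Variable I : rel Sigma.
Hypothesis I_irr : forall a, ~~ I a a.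
Hypothesis I_sym : forall a b, I a b = I b a.

Notation teq := (tequiv I).
Implicit Types (c d : {set Sigma}) (cs ds : seq {set Sigma}).

Lemma teq_refl u : teq u u. Proof. exact: rt_refl. Qed.
Lemma teq_trans u v w : teq u v -> teq v w -> teq u w. Proof. exact: rt_trans. Qed.
Lemma swap_sym u v : swap_step I u v -> swap_step I v u.
Proof. case=> p [q [a [b [Hab [-> ->]]]]]. exists p, q, b, a. by rewrite I_sym. Qed.
Lemma teq_sym u v : teq u v -> teq v u.
Proof.
elim=> [x y /swap_sym H|x|x y z _ H1 _ H2].
- exact: rt_step.
- exact: rt_refl.
- exact: rt_trans H2 H1.
Qed.

Lemma swap_cat p q u v : swap_step I u v -> swap_step I (p ++ u ++ q) (p ++ v ++ q).
Proof.
case=> p' [q' [a [b [Hab [-> ->]]]]]. exists (p ++ p'), (q' ++ q), a, b.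
by rewrite -!catA /=.
Qed.

Lemma teq_cat p q u v : teq u v -> teq (p ++ u ++ q) (p ++ v ++ q).
Proof.
elim=> [x y H|x|x y z _ H1 _ H2].
- exact/rt_step/swap_cat.
- exact: rt_refl.
- exact: rt_trans H1 H2.
Qed.

Lemma teq_catl p u v : teq u v -> teq (p ++ u) (p ++ v).
Proof. by move=> /(teq_cat p [::]); rewrite !cats0. Qed.
Lemma teq_catr q u v : teq u v -> teq (u ++ q) (v ++ q).
Proof. by move=> /(teq_cat [::] q). Qed.

Lemma teq_size u v : teq u v -> size u = size v.
Proof.
elim=> [x y [p [q [a [b [_ [-> ->]]]]]]|x|x y z _ -> _ ->] //.
by rewrite !size_cat.
Qed.

Fixpoint minl (w : seq Sigma) (z : Sigma) : bool :=
  if w is b :: w' then (b == z) || (I b z && minl w' z) else false.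

Lemma minl_swap a b q z : I a b -> minl [:: a, b & q] z = minl [:: b, a & q] z.
Proof.
move=> Hab /=. have Hba : I b a by rewrite I_sym.
case Ea: (a == z); case Eb: (b == z) => //=.
- move/eqP: Ea => Ea. by rewrite -Ea Hba.
- move/eqP: Eb => Eb. by rewrite -Eb Hab.
- by case: (I a z); case: (I b z).
Qed.

Lemma minl_cat u v z :
  minl (u ++ v) z = minl u z || (all (fun b => I b z) u && minl v z).
Proof.
elim: u => //= b u ->.
by case: (b == z); case: (I b z); case: (minl u z).
Qed.

Lemma minl_teq u v z : teq u v -> minl u z = minl v z.
Proof.
elim=> [x y [p [q [a [b [Hab [-> ->]]]]]]|x|x y w _ -> _ ->] //.
rewrite !minl_cat. have := minl_swap q z Hab. rewrite /=.
case: (a == z); case: (b == z); case: (I a z); case: (I b z); by rewrite ?andbF.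
Qed.

Lemma minl_mem u z : minl u z -> z \in u.
Proof.
elim: u => //= b u IH /orP [/eqP ->|/andP [_ /IH H]]; rewrite in_cons ?eqxx //.
by rewrite H orbT.
Qed.

Lemma minl_clique u z : z \in u -> (forall b, b \in u -> b != z -> I b z) -> minl u z.
Proof.
elim: u => //= b u IH; rewrite in_cons => Hz Hu.
case E: (b == z) => //=.
rewrite Hu ?mem_head ?E //=.
apply: IH.
- by move: Hz; rewrite eq_sym E.
- by move=> c Hc; apply: Hu; rewrite in_cons Hc orbT.
Qed.

Lemma minl_cat_mem x y z : z \in x -> minl (x ++ y) z = minl x z.
Proof.
move=> Hz. rewrite minl_cat.
have -> : all (fun b => I b z) x = false.
  apply/negbTE/allPn. exists z => //. 
by rewrite andFb orbF.
Qed.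


Definition flat (cs : seq {set Sigma}) : seq Sigma := flatten (map (@clique_word Sigma) cs).
Lemma flat_cons c cs : flat (c :: cs) = enum c ++ flat cs. Proof. by []. Qed.
Lemma flat_rcons cs c : flat (rcons cs c) = flat cs ++ enum c.
Proof. by rewrite /flat map_rcons flatten_rcons. Qed.

Lemma cliqueP c : is_clique I c -> forall a b, a \in c -> b \in c -> a != b -> I a b.
Proof.
move=> /forallP H a b Ha Hb Nab.
move: (H a); rewrite Ha /= => /forallP /(_ b). by rewrite Hb Nab.
Qed.

Lemma cliqueI c : (forall a b, a \in c -> b \in c -> a != b -> I a b) -> is_clique I c.
Proof.
move=> H; apply/forallP => a; apply/implyP => Ha; apply/forallP => b; apply/implyP => Hb.
apply/implyP; exact: H.
Qed.

Lemma is_nf_cons c cs :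
  is_nf I (c :: cs) = [&& nclique I c, is_nf I cs & (if cs is d :: _ then arrow I c d else true)].
Proof.
rewrite /is_nf /=. case: cs => [|d ds] /=; first by rewrite !andbT.
by case: (nclique I c); case: (nclique I d); case: (all (nclique I) ds);
   case: (arrow I c d); case: (path (arrow I) d ds).
Qed.

Lemma arrowP c d : arrow I c d -> forall b, b \in d -> exists2 a, a \in c & ~~ I a b.
Proof. move=> /forallP H b Hb. move: (H b); rewrite Hb /= => /existsP [a /andP [Ha Hab]]. by exists a. Qed.

Lemma arrowI c d : (forall b, b \in d -> exists2 a, a \in c & ~~ I a b) -> arrow I c d.
Proof.
move=> H; apply/forallP => b; apply/implyP => Hb. have [a Ha Hab] := H b Hb.
apply/existsP; exists a; by rewrite Ha.
Qed.

Lemma arrow_mono c (c' : {set Sigma}) d : arrow I c d -> c \subset c' -> arrow I c' d.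
Proof.
move=> H Hs; apply: arrowI => b Hb. have [a Ha Hab] := arrowP H Hb.
exists a => //. exact: (subsetP Hs).
Qed.

Definition dep a (s : seq Sigma) := has (fun b => ~~ I b a) s.

Lemma nodepP a s : ~~ dep a s -> forall b, b \in s -> I b a.
Proof. move=> /hasPn H b Hb. by move: (H b Hb); rewrite negbK. Qed.

Lemma nodep_notin a s : ~~ dep a s -> a \notin s.
Proof. move=> H; apply/negP => Ha. by move: (nodepP H Ha); rewrite (negbTE (I_irr a)). Qed.

Lemma nclique_add a c : nclique I c -> ~~ dep a (enum c) -> nclique I (a |: c).
Proof.
move=> /andP [Hc _] Hd. apply/andP; split; last first.
  apply/set0Pn; exists a; by rewrite setU11.
apply: cliqueI => x y; rewrite !in_setU1 => /orP [/eqP ->|Hx] /orP [/eqP ->|Hy] Nxy.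
- by rewrite eqxx in Nxy.
- rewrite I_sym. apply: (nodepP Hd). by rewrite mem_enum.
- apply: (nodepP Hd). by rewrite mem_enum.
- exact: (cliqueP Hc).
Qed.

Lemma nclique1 a : nclique I [set a].
Proof.
apply/andP; split; last by apply/set0Pn; exists a; rewrite set11.
apply: cliqueI => x y; rewrite !in_set1 => /eqP -> /eqP ->. by rewrite eqxx.
Qed.

Definition addf a (cs : seq {set Sigma}) :=
  if cs is d :: ds then (a |: d) :: ds else [:: [set a]].

Fixpoint ins a (cs : seq {set Sigma}) : seq {set Sigma} :=
  match cs with
  | [::] => [:: [set a]]
  | c :: cs' => if dep a (flat cs') then c :: ins a cs'
                else if dep a (enum c) then c :: addf a cs'
                else (a |: c) :: cs'
  end.

Lemma ins_head a d ds : dep a (flat (d :: ds)) -> exists ds', ins a (d :: ds) = d :: ds'.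
Proof.
rewrite flat_cons /dep has_cat -/(dep a (enum d)) -/(dep a (flat ds)) /=.
case: (dep a (flat ds)) => /=; first by eexists.
case: (dep a (enum d)) => //= _; by eexists.
Qed.

Lemma is_nf_ins a cs : is_nf I cs -> is_nf I (ins a cs).
Proof.
elim: cs => [|c cs IH] /=; first by move=> _; rewrite /is_nf /= nclique1.
rewrite is_nf_cons => /and3P [Hc Hcs Har].
case Hd1: (dep a (flat cs)).
  case: cs Hd1 Hcs Har IH => [|d ds] Hd1 Hcs Har IH; first by [].
  have [ds' E] := ins_head Hd1. rewrite E is_nf_cons Hc -E IH //= E.
case Hd2: (dep a (enum c)).
  clear IH. case: cs Hd1 Hcs Har => [|d ds] Hd1 Hcs Har /=.
    rewrite is_nf_cons Hc /is_nf /= nclique1 /=. apply: arrowI => b; rewrite in_set1 => /eqP ->.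
    by case/hasP: Hd2 => x; rewrite mem_enum => Hx Hxa; exists x.
  move: Hcs; rewrite !is_nf_cons Hc => /and3P [Hd Hds Har'].
  have Hnd : ~~ dep a (enum d).
    by move: Hd1; rewrite flat_cons /dep has_cat => /negbT; rewrite negb_or => /andP [].
  rewrite nclique_add //= Hds /=. apply/andP; split.
    case: ds Hds Har' {Hd1} => // e es _ Har'. apply: arrow_mono Har' _. exact: subsetUr.
  apply: arrowI => b; rewrite in_setU1 => /orP [/eqP ->|Hb].
    by case/hasP: Hd2 => x; rewrite mem_enum => Hx Hxa; exists x.
  exact: arrowP Har b Hb.
clear IH. rewrite is_nf_cons nclique_add ?Hd2 //= Hcs /=.
case: cs Har {Hd1 Hcs} => // d ds Har. apply: arrow_mono Har _. exact: subsetUr.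
Qed.


Lemma teq_commute a u : ~~ dep a u -> teq (u ++ [:: a]) (a :: u).
Proof.
elim: u => [|b u IH] /=; first by move=> _; exact: teq_refl.
rewrite /dep /= negb_or negbK => /andP [Hba Hu].
apply: teq_trans (teq_catl [:: b] (IH Hu)) _.
apply: rt_step. exists [::], u, b, a. by rewrite Hba.
Qed.

Lemma teq_perm u v : uniq u -> perm_eq u v ->
  (forall x y, x \in u -> y \in u -> x != y -> I x y) -> teq u v.
Proof.
elim: u v => [|x u IH] v Hu Hp Hi.
  case: v Hp {Hi Hu} => [|y v] Hp; first exact: teq_refl. by have := perm_size Hp.
have xv : x \in v by rewrite -(perm_mem Hp) mem_head.
case/splitPr: xv Hp => v1 v2 Hp.
have Hp' : perm_eq u (v1 ++ v2).
  rewrite -(perm_cons x). apply: perm_trans Hp _. by rewrite -cat1s perm_catCA.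
move: Hu => /= /andP [xu Hu].
have Hv : uniq (v1 ++ x :: v2) by rewrite -(perm_uniq Hp) /= xu.
have xv1 : x \notin v1.
  by move: Hv; rewrite cat_uniq => /and3P [_ /hasPn H _]; exact: (H x (mem_head _ _)).
apply: teq_trans (teq_catl [:: x] (IH _ Hu Hp' _)) _.
  by move=> y z Hy Hz; apply: Hi; rewrite in_cons ?Hy ?Hz orbT.
rewrite -cat1s -[v1 ++ x :: v2]/(v1 ++ [:: x] ++ v2) catA [_ ++ v1 ++ v2]catA.
apply: teq_catr. apply: teq_sym. apply: teq_commute. apply/hasPn => b Hb.
rewrite negbK. apply: Hi.
- by rewrite (perm_mem Hp) mem_cat Hb.
- exact: mem_head.
- by apply/eqP => E; move: xv1; rewrite -E Hb.
Qed.

Lemma teq_ins a cs : is_nf I cs -> teq (flat cs ++ [:: a]) (flat (ins a cs)).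
Proof.
elim: cs => [|c cs IH] /=.
  by move=> _; rewrite /flat /clique_word /= enum_set1; exact: teq_refl.
rewrite is_nf_cons => /and3P [Hc Hcs Har].
case Hd1: (dep a (flat cs)).
  rewrite !flat_cons -catA. exact: teq_catl (IH Hcs).
have Hc1 : ~~ dep a (flat cs) by rewrite Hd1.
have Hadd : forall d, nclique I d -> ~~ dep a (enum d) -> teq (enum d ++ [:: a]) (enum (a |: d)).
  move=> d Hd Hnd.
  have Hu : uniq (enum d ++ [:: a]) by rewrite cats1 rcons_uniq enum_uniq andbT; exact: nodep_notin.
  apply: teq_perm => //.
  - apply: uniq_perm => //; first exact: enum_uniq.
    by move=> x; rewrite mem_cat !mem_enum in_setU1 mem_seq1 orbC.
  - move=> x y Hx Hy; apply: (cliqueP (proj1 (andP (nclique_add Hd Hnd)))).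
    + by move: Hx; rewrite mem_cat mem_enum mem_seq1 in_setU1 orbC.
    + by move: Hy; rewrite mem_cat mem_enum mem_seq1 in_setU1 orbC.
case Hd2: (dep a (enum c)).
  rewrite !flat_cons -catA. apply: teq_catl.
  case: cs Hd1 Hc1 Hcs Har {IH} => [|d ds] Hd1 Hc1 Hcs Har.
    by rewrite /flat /clique_word /= enum_set1 cats0; exact: teq_refl.
  rewrite /= !flat_cons -!catA.
  move: Hc1; rewrite flat_cons /dep has_cat negb_or => /andP [Hnd Hnds].
  apply: teq_trans (teq_catl (enum d) (teq_commute Hnds)) _.
  rewrite -[enum d ++ a :: flat ds]/(enum d ++ [:: a] ++ flat ds) catA.
  apply: teq_catr. apply: Hadd => //. by move: Hcs; rewrite is_nf_cons => /and3P [].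
rewrite !flat_cons -catA.
apply: teq_trans (teq_catl (enum c) (teq_commute Hc1)) _.
rewrite -[enum c ++ a :: flat cs]/(enum c ++ [:: a] ++ flat cs) catA.
apply: teq_catr. apply: Hadd => //. by rewrite Hd2.
Qed.

Lemma nf_exists w : exists cs, nf_of I w cs.
Proof.
elim/last_ind: w => [|w a [cs [Hnf Ht]]].
  by exists [::]; split => //; exact: teq_refl.
exists (ins a cs); split; first exact: is_nf_ins.
rewrite -cats1. exact: teq_trans (teq_catr _ Ht) (teq_ins a Hnf).
Qed.


Lemma nf_aux c cs z : is_nf I (c :: cs) -> z \notin c ->
  ~~ (all (fun b => I b z) (enum c) && minl (flat cs) z).
Proof.
elim: cs c => [|d ds IH] c; first by rewrite andbF.
rewrite is_nf_cons => /and3P [Hc Hds Har] Hz.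
rewrite flat_cons minl_cat.
case Hzd: (z \in d).
  have [a Ha Haz] := arrowP Har Hzd.
  apply/negP => /andP [/allP /(_ a) H _]. by move: Haz; rewrite H // mem_enum.
have -> : minl (enum d) z = false.
  by apply/negP => /minl_mem; rewrite mem_enum Hzd.
move: (IH d Hds (negbT Hzd)). by case: (all _ (enum c)); case: (all _ (enum d)); case: (minl _ z).
Qed.

Lemma nf_head c cs z : is_nf I (c :: cs) -> minl (flat (c :: cs)) z = (z \in c).
Proof.
move=> H. rewrite flat_cons minl_cat.
case Hz: (z \in c).
  rewrite minl_clique // ?mem_enum // => b; rewrite mem_enum => Hb.
  apply: (cliqueP _ Hb Hz). by move: H; rewrite is_nf_cons => /and3P [/andP []].
have -> : minl (enum c) z = false by apply/negP => /minl_mem; rewrite mem_enum Hz.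
by apply/negbTE/nf_aux => //; rewrite Hz.
Qed.

Lemma nf_minl w c cs z : nf_of I w (c :: cs) -> minl w z = (z \in c).
Proof. case=> Hnf Ht. by rewrite (minl_teq z Ht) nf_head. Qed.

Lemma nf_nil_minl w z : nf_of I w [::] -> minl w z = false.
Proof. case=> _ Ht. by rewrite (minl_teq z Ht). Qed.

Lemma nclique_nonempty c : nclique I c -> exists z, z \in c.
Proof. by case/andP => _ /set0Pn. Qed.

Lemma size_flat cs : size (flat cs) <= size cs * #|Sigma|.
Proof.
elim: cs => //= c cs IH. rewrite flat_cons size_cat mulSn -cardE.
apply: leq_add => //. exact: max_card.
Qed.

Lemma ins_last a cs : cs != [::] -> ~~ dep a (enum (last set0 cs)) ->
  size (ins a cs) = size cs /\ last set0 (ins a cs) \subset a |: last set0 cs.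
Proof.
elim: cs => [|c cs IH] // _.
case: cs IH => [|d ds] IH.
  move=> Hn. rewrite /= (negbTE Hn) /=. by split.
move=> Hn.
case Hd1: (dep a (flat (d :: ds))).
  have Eins : ins a [:: c, d & ds] = c :: ins a (d :: ds) by rewrite /= Hd1.
  have [ds' E] := ins_head Hd1.
  have [Hs Hl] := IH isT Hn. rewrite Eins; split; first by rewrite /= Hs.
  have -> : last set0 (c :: ins a (d :: ds)) = last set0 (ins a (d :: ds)) by rewrite E.
  exact: Hl.
case Hd2: (dep a (enum c)).
  have Eins : ins a [:: c, d & ds] = c :: (a |: d) :: ds by rewrite /= Hd1 Hd2.
  rewrite Eins. split => //. case: ds {IH Hn Hd1 Eins} => [|e es] /=; first exact: subxx.
  exact: subsetUr.
have Eins : ins a [:: c, d & ds] = (a |: c) :: d :: ds by rewrite /= Hd1 Hd2.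
rewrite Eins. split => //. exact: subsetUr.
Qed.

Lemma ins_ne a cs : ins a cs != [::].
Proof. case: cs => //= c cs. by case: ifP => //; case: ifP. Qed.

Definition insl cs r := foldl (fun cs a => ins a cs) cs r.

Lemma insl_props d r cs : is_nf I cs -> cs != [::] -> nclique I d ->
  last set0 cs \subset d -> uniq r -> {subset r <= d} ->
  (forall b, b \in r -> b \notin last set0 cs) ->
  [/\ is_nf I (insl cs r), size (insl cs r) = size cs & teq (flat cs ++ r) (flat (insl cs r))].
Proof.
move=> Hnf Hne /andP [Hd _].
elim: r cs Hnf Hne => [|a r IH] cs Hnf Hne Hl Hu Hr Hdis /=.
  split => //. rewrite cats0. exact: teq_refl.
move: Hu => /andP [ar Hu].
have Had : a \in d by apply: Hr; rewrite mem_head.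
have Han : a \notin last set0 cs by apply: Hdis; rewrite mem_head.
have Hnd : ~~ dep a (enum (last set0 cs)).
  apply/hasPn => b; rewrite mem_enum => Hb. rewrite negbK. apply: (cliqueP Hd).
  - exact: (subsetP Hl).
  - exact: Had.
  - by apply/eqP => E; move: Han; rewrite -E Hb.
have [Hs Hl'] := ins_last Hne Hnd.
have Hne' : ins a cs != [::] by apply: ins_ne.
have Hsub : a |: last set0 cs \subset d by rewrite subUset sub1set Had Hl.
have Hr' : {subset r <= d} by move=> b Hb; apply: Hr; rewrite in_cons Hb orbT.
have Hdis' : forall b, b \in r -> b \notin last set0 (ins a cs).
  move=> b Hb. apply/negP => /(subsetP Hl'). rewrite in_setU1 => /orP [/eqP E|].
  + by move: ar; rewrite -E Hb.
  + by apply/negP; apply: Hdis; rewrite in_cons Hb orbT.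
have [H1 H2 H3] := IH (ins a cs) (is_nf_ins a Hnf) Hne' (subset_trans Hl' Hsub) Hu Hr' Hdis'.
split => //; first by rewrite H2.
rewrite -cat1s catA. exact: teq_trans (teq_catr _ (teq_ins a Hnf)) H3.
Qed.


Variable X : finType.
Variable delta : X -> Sigma -> option X.
Hypothesis Hact : action_of_trace_monoid I delta.

Lemma act_cat al u v : act delta al (u ++ v) = acto delta (act delta al u) v.
Proof. elim: u al => //= a u IH al. case: (delta al a) => //. Qed.

Lemma inM_catl al u v : inM delta al (u ++ v) -> inM delta al u.
Proof. rewrite /inM act_cat. by case: (act delta al u). Qed.

Lemma inM_teq al u v : tequiv I u v -> inM delta al u = inM delta al v.
Proof. move=> H. by rewrite /inM (Hact al H). Qed.

Lemma part1 al c : maximal_in_C I delta al c -> positive I delta al c.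
Proof.
case=> Hn Hmax. exists (clique_word c). split; first by case/andP: Hn.
move=> y Hy.
have Hin : inM delta al (enum c ++ y) by rewrite /inM act_cat.
have [cs Hnf] := nf_exists (enum c ++ y).
have [z Hz] := nclique_nonempty (proj1 (andP Hn)).
have Hmc : forall z, z \in c -> minl (enum c ++ y) z.
  move=> w Hw. rewrite minl_cat_mem ?mem_enum //. apply: minl_clique; first by rewrite mem_enum.
  move=> b; rewrite mem_enum => Hb. apply: (cliqueP _ Hb Hw). by case/andP: Hn => /andP [].
case: cs Hnf => [|d ds] Hnf.
  by move: (Hmc z Hz); rewrite (nf_nil_minl z Hnf).
have Hcd : c \subset d by apply/subsetP => w Hw; rewrite -(nf_minl w Hnf) Hmc.
have Hnd : node I delta al d.
  case: Hnf => Hnf Ht. apply/andP; split; first by move: Hnf; rewrite is_nf_cons => /and3P [].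
  apply: (@inM_catl _ _ (flat ds)). rewrite -flat_cons -(inM_teq _ Ht). exact: Hin.
have E := Hmax d Hnd Hcd. rewrite /C1. exists ds. rewrite E in Hnf. exact: Hnf.
Qed.

Lemma part2 al c al' c' : dsc_arc I delta al c al' c' ->
  positive I delta al' c' -> positive I delta al c.
Proof.
case=> Hn [Hn' [Ha Har]] [x' [Hx' Hy]].
exists (clique_word c ++ x'). split.
  by rewrite /inM act_cat Ha.
move=> y. rewrite act_cat Ha /= => /Hy; rewrite /C1 => -[cs [Hnf Ht]].
exists (c' :: cs). split.
  rewrite is_nf_cons; apply/and3P; split => //. by case/andP: Hn.
rewrite -catA. exact: (teq_catl (clique_word c) Ht).
Qed.

Lemma part4 al c : null_node I delta al c ->
  forall x, inM delta al x -> C1 I x c -> exists a : Sigma, a \notin x.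
Proof.
case=> Hn Hnp x Hx [cs0 Hc].
case/boolP: [exists a, a \notin x] => [/existsP //|].
rewrite negb_exists => /forallP Hall.
exfalso; apply: Hnp. exists x; split => // y _.
have Hm : forall z, minl (x ++ y) z = (z \in c).
  move=> z. by rewrite minl_cat_mem ?(nf_minl z Hc) // -[z \in x]negbK Hall.
have [cs Hnf] := nf_exists (x ++ y).
have [z Hz] : exists z, z \in c.
  by case: Hc => /andP [/andP [Hcn _] _] _; apply: nclique_nonempty.
case: cs Hnf => [|d ds] Hnf.
  by move: (Hm z); rewrite (nf_nil_minl z Hnf) Hz.
have E : c = d by apply/setP => w; rewrite -Hm (nf_minl w Hnf).
rewrite /C1. exists ds. rewrite E. exact: Hnf.
Qed.


Lemma path_pos cs1 L al be : is_nf I (rcons cs1 L) -> act delta al (flat cs1) = Some be ->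
  maximal_in_C I delta be L -> dsc_path_positive I delta al (rcons cs1 L).
Proof.
elim: cs1 al => [|c cs1 IH] al Hnf Ha Hm /=.
  have Eab : al = be by case: Ha. subst be. split; first exact: part1.
  case: Hm => /andP [_]; rewrite /inM. by case: (act delta al (clique_word L)).
move: Ha; rewrite flat_cons act_cat. case E: (act delta al (enum c)) => [al'|] //= Ha'.
have Hnf' : is_nf I (rcons cs1 L) by move: Hnf; rewrite rcons_cons is_nf_cons => /and3P [].
have IHp := IH al' Hnf' Ha' Hm.
have Hnode : node I delta al c.
  apply/andP; split; first by move: Hnf; rewrite rcons_cons is_nf_cons => /and3P [].
  have E' : act delta al (clique_word c) = Some al' := E. move: E'; rewrite /inM. by case: (act delta al (clique_word c)).
have E' : act delta al (clique_word c) = Some al' := E.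
split; last by rewrite ?E'; exact: IHp.
case E2: (rcons cs1 L) IHp Hnf Hnf' => [|c2 rest].
  by move/(f_equal size): E2; rewrite size_rcons.
move=> [Hp _] Hnf Hnf'.
apply: (part2 (al' := al') (c' := c2)) Hp.
move: Hnf; rewrite rcons_cons E2 is_nf_cons => /and3P [Hc Hnf2 Har].
split => //; split; last split => //.
apply/andP; split; first by move: Hnf2; rewrite is_nf_cons => /and3P [].
apply: (@inM_catl _ _ (flat rest)). rewrite -flat_cons -E2 flat_rcons /inM act_cat Ha' /=.
by case: Hm => /andP [].
Qed.

Lemma part3 al x : inM delta al x -> exists y, inMo delta (act delta al x) y /\
  exists cs cs0, nf_of I (x ++ y) cs /\ nf_of I x cs0 /\ size cs = size cs0 /\
    dsc_path_positive I delta al cs.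
Proof.
move=> Hx. have [cs0 H0] := nf_exists x.
pose N := size cs0 * #|Sigma|.
have bound : forall y cs, nf_of I (x ++ y) cs -> size cs = size cs0 -> size y <= N.
  move=> y cs [_ Ht] Hs. have := teq_size Ht. rewrite size_cat => E.
  have := size_flat cs. rewrite /flat -E Hs. lia.
have step : forall y cs, inM delta al (x ++ y) -> nf_of I (x ++ y) cs -> size cs = size cs0 ->
   dsc_path_positive I delta al cs \/ exists y2 cs2, [/\ inM delta al (x ++ y2),
      nf_of I (x ++ y2) cs2, size cs2 = size cs0 & size y < size y2].
  move=> y cs Hin [Hnf Ht] Hsz.
  case/lastP: cs Hnf Ht Hsz => [|cs1 L] Hnf Ht Hsz; first by left.
  have Hin2 : inM delta al (flat (rcons cs1 L)) by rewrite -(inM_teq _ Ht).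
  move: (Hin2); rewrite /inM flat_rcons act_cat. case Eb: (act delta al (flat cs1)) => [be|] //= HL.
  have HnL : node I delta be L.
    apply/andP; split => //. move: Hnf => /andP [/allP Hall _]. apply: Hall.
    by rewrite mem_rcons mem_head.
  case Hmx: [forall d : {set Sigma}, (node I delta be d && (L \subset d)) ==> (d == L)].
    left. apply: path_pos Hnf Eb _. split => // d Hd HLd.
    move/forallP: Hmx => /(_ d). by rewrite Hd HLd => /eqP.
  right. move/negbT: Hmx; rewrite negb_forall => /existsP [d].
  rewrite negb_imply => /andP [/andP [Hd HLd] NdL].
  pose r := enum (d :\: L).
  have Hd' : nclique I d by case/andP: Hd.
  have Hne : rcons cs1 L != [::] by rewrite -size_eq0 size_rcons.
  have Hl : last set0 (rcons cs1 L) \subset d by rewrite last_rcons.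
  have Hr1 : {subset r <= d} by move=> b; rewrite mem_enum in_setD => /andP [].
  have Hr2 : forall b, b \in r -> b \notin last set0 (rcons cs1 L).
    by move=> b; rewrite last_rcons mem_enum in_setD => /andP [].
  have [H1 H2 H3] := @insl_props d r (rcons cs1 L) Hnf Hne Hd' Hl (enum_uniq _) Hr1 Hr2.
  have Ht2 : tequiv I (x ++ y ++ r) (flat (rcons cs1 L) ++ r) by rewrite catA; exact: teq_catr.
  have HdL : (d :\: L) != set0.
    apply: contra NdL => /eqP E. rewrite eqEsubset HLd andbT. by rewrite -setD_eq0 E.
  exists (y ++ r), (insl (rcons cs1 L) r). split => //.
  - rewrite (Hact al Ht2) flat_rcons -catA act_cat Eb /=.
    have Hu : uniq (enum L ++ r).
      rewrite cat_uniq !enum_uniq andbT /=. apply/hasPn => b.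
      by rewrite /r mem_enum in_setD mem_enum => /andP [].
    have Hmem : forall z, z \in enum L ++ r -> z \in d.
      move=> z; rewrite mem_cat /r !mem_enum in_setD => /orP [/(subsetP HLd) //|/andP [] //].
    have Ht3 : tequiv I (enum L ++ r) (enum d).
      apply: (teq_perm Hu).
      + apply: uniq_perm; [exact: Hu | exact: enum_uniq | ].
        move=> z; rewrite mem_cat /r !mem_enum in_setD.
        case Hz: (z \in L) => /=; last by [].
        by rewrite (subsetP HLd).
      + move=> a b Ha Hb. apply: (cliqueP _ (Hmem a Ha) (Hmem b Hb)). by case/andP: Hd'.
    rewrite (Hact be Ht3). by case/andP: Hd.
  - split => //. rewrite catA. exact: teq_trans (teq_catr _ Ht) H3.
  - by rewrite H2.
  - by rewrite size_cat -cardE -ltn_subLR ?subnn ?card_gt0 // leq_addr.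
suff: forall k y cs, inM delta al (x ++ y) -> nf_of I (x ++ y) cs -> size cs = size cs0 ->
    N - size y <= k -> exists y' cs', [/\ inM delta al (x ++ y'), nf_of I (x ++ y') cs',
    size cs' = size cs0 & dsc_path_positive I delta al cs'].
  move=> /(_ N [::] cs0). rewrite cats0 => /(_ Hx H0 erefl (leq_subr _ _)) [y' [cs' [H1 H2 H3 H4]]].
  exists y'; split; first by move: H1; rewrite /inM /inMo act_cat.
  by exists cs', cs0.
elim=> [|k IH] y cs Hin Hnf Hsz Hk.
  case: (step y cs Hin Hnf Hsz) => [Hp|[y2 [cs2 [H1 H2 H3 H4]]]]; first by exists y, cs.
  have := bound _ _ H2 H3. lia.
case: (step y cs Hin Hnf Hsz) => [Hp|[y2 [cs2 [H1 H2 H3 H4]]]]; first by exists y, cs.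
apply: (IH y2 cs2) => //. have := bound _ _ H2 H3. lia.
Qed.

End Traces.

Theorem proposition6 (Sigma X : finType) (I : rel Sigma)
  (I_irr : forall a, ~~ I a a) (I_sym : forall a b, I a b = I b a)
  (delta : X -> Sigma -> option X)
  (Hact : action_of_trace_monoid I delta) :
  (* (1) *)
  (forall alpha : X, (exists x, inM delta alpha x /\ x <> [::]) ->
     forall c, maximal_in_C I delta alpha c -> positive I delta alpha c) /\
  (* (2) *)
  (forall alpha c alpha' c', dsc_arc I delta alpha c alpha' c' ->
     positive I delta alpha' c' -> positive I delta alpha c) /\
  (* (3) *)
  (forall (alpha : X) x, inM delta alpha x ->
     exists y, inMo delta (act delta alpha x) y /\
       exists cs cs0, nf_of I (x ++ y) cs /\ nf_of I x cs0 /\ size cs = size cs0 /\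
         dsc_path_positive I delta alpha cs) /\
  (* (4) *)
  (forall alpha c, null_node I delta alpha c ->
     forall x, inM delta alpha x -> C1 I x c -> exists a : Sigma, a \notin x).
Proof.
split; [|split; [|split]].
- move=> al _ c Hm. by eapply part1; eauto.
- move=> al c al' c' Ha Hp. by eapply part2; eauto.
- move=> al x Hx. by eapply part3; eauto.
- move=> al c Hn x Hx Hc. by eapply part4; eauto.
Qed.
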